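(* Let $k>1$, let $f$ be a positive function, differentiable on $[0,1]$, and define $g(R)=\dfrac{k-1}{\frac{k-1}{k}-R}$ for $R\neq\frac{k-1}{k}$. Consider the planar system $$\frac{dI}{d\tau}=I\,[f(R)(1-I-R)-k],\qquad \frac{dR}{d\tau}=(k-1)I-R,$$ and let $(I^*,R^* )$ be an endemic equilibrium point of it. If $$\frac{df}{dR}(R^* )<\frac{dg}{dR}(R^* )\quad\left(\text{equivalently } <\tfrac{1}{k-1}g^2(R^* ),\ \text{equivalently } <\tfrac{1}{k-1}f^2(R^* )\right),$$ then $(I^*,R^* )$ is a locally stable equilibrium point. If $$\frac{df}{dR}(R^* )>\frac{dg}{dR}(R^* )\quad\left(\text{equivalently } >\tfrac{1}{k-1}g^2(R^* ),\ \text{equivalently } >\tfrac{1}{k-1}f^2(R^* )\right),$$ then $(I^*,R^* )$ is a local saddle point.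
   Context: An endemic equilibrium is an equilibrium point $(I^*,R^* )$ of the system with $I^*>0$. ''Locally stable'' means locally asymptotically stable (both eigenvalues of the Jacobian at the point have negative real part); ''saddle'' means the Jacobian at the point has one positive and one negative real eigenvalue. *)

(* Defs.v *)
From Stdlib Require Import Reals.
From Coquelicot Require Import Coquelicot.
Open Scope R_scope.

Definition F1 (f : R -> R) (k I Rv : R) : R := I * (f Rv * (1 - I - Rv) - k).
Definition F2 (k I Rv : R) : R := (k - 1) * I - Rv.

Definition g (k Rv : R) : R := (k - 1) / ((k - 1) / k - Rv).

Definition is_equilibrium (f : R -> R) (k I Rv : R) : Prop :=
  F1 f k I Rv = 0 /\ F2 k I Rv = 0.
Definition is_endemic_equilibrium (f : R -> R) (k I Rv : R) : Prop :=
  is_equilibrium f k I Rv /\ 0 < I.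

Definition jac11 f k I Rv : R := Derive (fun x => F1 f k x Rv) I.
Definition jac12 f k I Rv : R := Derive (fun y => F1 f k I y) Rv.
Definition jac21 k I Rv : R := Derive (fun x => F2 k x Rv) I.
Definition jac22 k I Rv : R := Derive (fun y => F2 k I y) Rv.

Definition is_jac_eigenvalue (f : R -> R) (k I Rv : R) (l : C) : Prop :=
  ((RtoC (jac11 f k I Rv) - l) * (RtoC (jac22 k I Rv) - l)
  - RtoC (jac12 f k I Rv) * RtoC (jac21 k I Rv) = 0)%C.

Definition locally_stable (f : R -> R) (k I Rv : R) : Prop :=
  forall l : C, is_jac_eigenvalue f k I Rv l -> Re l < 0.

Definition saddle (f : R -> R) (k I Rv : R) : Prop :=
  exists l1 l2 : C,
    is_jac_eigenvalue f k I Rv l1 /\ is_jac_eigenvalue f k I Rv l2 /\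
    Im l1 = 0 /\ Im l2 = 0 /\ 0 < Re l1 /\ Re l2 < 0.

(* Main.v *)
Require Import Defs.
From Stdlib Require Import Reals Lra Psatz.
From Coquelicot Require Import Coquelicot.
Open Scope R_scope.

Lemma eig_parts (a b c d : R) (l : C) :
  ((RtoC a - l) * (RtoC d - l) - RtoC b * RtoC c = 0)%C ->
  (a - Re l) * (d - Re l) - Im l * Im l - b * c = 0 /\
  Im l * (a + d - 2 * Re l) = 0.
Proof.
  destruct l as [x y]. intros H.
  pose proof (f_equal fst H) as H1. pose proof (f_equal snd H) as H2.
  simpl in H1, H2. unfold Re, Im; simpl. split; nra.
Qed.

Lemma eig_real (a b c d x : R) :
  (a - x) * (d - x) - b * c = 0 ->
  ((RtoC a - RtoC x) * (RtoC d - RtoC x) - RtoC b * RtoC c = 0)%C.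
Proof.
  intros H. apply injective_projections; simpl; nra.
Qed.

Theorem theorem3 (k : R) (f : R -> R) (Is Rs : R) :
  1 < k ->
  (forall x, 0 <= x <= 1 -> 0 < f x) ->
  (forall x, 0 < x < 1 -> ex_derive f x) ->
  0 <= Rs <= 1 ->
  is_endemic_equilibrium f k Is Rs ->
  (Derive f Rs < Derive (g k) Rs -> locally_stable f k Is Rs) /\
  (Derive f Rs > Derive (g k) Rs -> saddle f k Is Rs).
Proof.
  intros Hk Hpos Hder HR [[E1 E2] HI].
  unfold F1, F2 in E1, E2.
  assert (HfR : 0 < f Rs) by (apply Hpos; lra).
  assert (Rsv : Rs = (k - 1) * Is) by lra.
  assert (ES : f Rs * (1 - Is - Rs) = k).
  { assert (Is * (f Rs * (1 - Is - Rs) - k) = 0) by lra.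
    apply Rmult_integral in H. destruct H; lra. }
  assert (Spos : 0 < 1 - Is - Rs).
  { destruct (Rle_lt_dec (1 - Is - Rs) 0); [|lra]. nra. }
  assert (HR' : 0 < Rs < 1) by nra.
  assert (Hdf := Hder Rs HR').
  set (fp := Derive f Rs) in *.
  set (S := 1 - Is - Rs) in *.
  set (a := jac11 f k Is Rs). set (b := jac12 f k Is Rs).
  set (c := jac21 k Is Rs). set (d := jac22 k Is Rs).
  assert (Ha : a = - Is * f Rs).
  { unfold a, jac11, F1. erewrite is_derive_unique. 2: auto_derive; auto.
    fold S. unfold S in *. nra. }
  assert (Hb : b = Is * (fp * S - f Rs)).
  { unfold b, jac12, F1. erewrite is_derive_unique. 2: auto_derive; auto.
    change (Derive (fun x : R => f x) Rs) with fp. unfold S. ring. }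
  assert (Hc : c = k - 1).
  { unfold c, jac21, F2. erewrite is_derive_unique. 2: auto_derive; auto. ring. }
  assert (Hd : d = -1).
  { unfold d, jac22, F2. erewrite is_derive_unique. 2: auto_derive; auto. ring. }
  assert (Hk0 : k <> 0) by lra.
  assert (Dpos : 0 < (k - 1) / k - Rs).
  { assert ((k - 1) / k - Rs = S * (k - 1) / k).
    { unfold S. rewrite Rsv. field. auto. }
    rewrite H. apply Rdiv_lt_0_compat; nra. }
  set (D := (k - 1) / k - Rs) in *.
  assert (Hg : Derive (g k) Rs = (k - 1) / (D * D)).
  { unfold g. erewrite is_derive_unique. 2: (auto_derive; [unfold D in *; lra | reflexivity]).
    unfold D in *. field. assert ((k-1)/k*k = k-1) by (field; lra). split; nra. }
  assert (HfD : f Rs * D = k - 1).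
  { assert (D = S * (k - 1) / k) by (unfold D, S; rewrite Rsv; field; auto).
    rewrite H. replace (f Rs * (S * (k - 1) / k)) with ((f Rs * S) * (k-1) / k) by (field; auto).
    rewrite ES. field; auto. }
  rewrite Hg.
  assert (HfD' : S * f Rs * D = S * (k - 1)) by (rewrite Rmult_assoc, HfD; ring).
  assert (Hdet : a * d - b * c = Is * S * (k - 1) * ((k - 1) / (D * D) - fp)).
  { rewrite Ha, Hb, Hc, Hd.
    assert (Hf : f Rs = (k - 1) / D) by (field_simplify_eq; lra).
    assert (HS : S = k * D / (k - 1)).
    { assert (S * f Rs * D = k * D) by (rewrite (Rmult_comm S), ES; ring).
      rewrite HfD' in H. field_simplify_eq; lra. }
    rewrite HS, Hf. field. lra. }
  assert (Hap : a < 0) by (rewrite Ha; nra).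
  assert (HISk : 0 < Is * S * (k - 1)).
  { apply Rmult_lt_0_compat; [apply Rmult_lt_0_compat|]; lra. }
  split.
  - intros Hlt l Hl. unfold is_jac_eigenvalue in Hl. fold a b c d in Hl.
    apply eig_parts in Hl. destruct Hl as [Hr Hi].
    assert (0 < a * d - b * c) by (rewrite Hdet; apply Rmult_lt_0_compat; lra).
    destruct (Req_dec (Im l) 0) as [H0|H0].
    + rewrite H0 in Hr. rewrite Hd in *.
      destruct (Rlt_le_dec (Re l) 0); [auto|]. nra.
    + assert (a + d - 2 * Re l = 0).
      { apply Rmult_integral in Hi. destruct Hi; [contradiction|auto]. }
      lra.
  - intros Hgt.
    assert (Dneg : a * d - b * c < 0).
    { rewrite Hdet. assert (0 < Is * S * (k - 1) * (fp - (k - 1) / (D * D)))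
        by (apply Rmult_lt_0_compat; lra). lra. }
    set (T := a + d). set (Q := a * d - b * c) in *.
    assert (Hdisc : 0 <= T * T - 4 * Q) by nra.
    set (s := sqrt (T * T - 4 * Q)).
    assert (Hs2 : s * s = T * T - 4 * Q) by (apply sqrt_sqrt; auto).
    assert (Hs0 : 0 <= s) by apply sqrt_pos.
    assert (HsT : T * T < s * s) by lra.
    assert (Hs1 : T < s) by nra.
    assert (Hs3 : - T < s) by nra.
    exists (RtoC ((T + s) / 2)), (RtoC ((T - s) / 2)).
    unfold is_jac_eigenvalue. fold a b c d.
    split; [apply eig_real; unfold T, Q in *; nra|].
    split; [apply eig_real; unfold T, Q in *; nra|].
    simpl. repeat split; lra.
Qed.
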